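(* Let $L$ be a subspace of $\bigwedge^{k}V$. If $N_{j\to i}L=L$ for all distinct $i,j\in[n]$, then $L$ has a basis consisting of monomials $e_S=e_{s_1}\wedge\cdots\wedge e_{s_k}$ ($S=\{s_1<\cdots<s_k\}\subseteq[n]$).
   Context: $\mathbb{F}$ is a field (assumed throughout the paper, for expository purposes, to have characteristic not $2$), $V$ is an $n$-dimensional $\mathbb{F}$-vector space with a fixed basis $e_1,\dots,e_n$, and $\bigwedge V$ its exterior algebra. For $j\in[n]$, $V^{(j)}$ is the span of $\{e_h:h\neq j\}$. Slow shift: for distinct $i,j\in[n]$ and nonzero $m\in\bigwedge^kV$, write uniquely $m=x+e_j\wedge y$ with $x\in\bigwedge^kV^{(j)}$, $y\in\bigwedge^{k-1}V^{(j)}$, and set $N_{j\to i}m=x+e_i\wedge y$ if this is nonzero, and $N_{j\to i}m=e_j\wedge y$ otherwise (the limit as $t\to0$ of the projective action of the linear map $e_j\mapsto e_i+te_j$ fixing the other $e_h$). For a subspace $L$ of $\bigwedge^kV$, $N_{j\to i}L$ is the span of $\{N_{j\to i}m:m\in L\setminus\{0\}\}$. *)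

(* Defs.v *)
From HB Require Import structures.
From mathcomp Require Import all_boot all_order all_algebra.
Set Implicit Arguments. Unset Strict Implicit. Unset Printing Implicit Defensive.
Import GRing.Theory.
Local Open Scope ring_scope.

(* The exterior algebra /\V of V = F^n (basis e_0,...,e_{n-1}), realized
   concretely in the monomial basis: an element is the family of its
   coordinates on the monomials e_S, S a subset of [n]
   (e_S = e_{s_1} /\ ... /\ e_{s_k} with s_1 < ... < s_k). *)
Definition ext (F : fieldType) (n : nat) := {ffun {set 'I_n} -> F^o}.

Definition emono (F : fieldType) (n : nat) (S : {set 'I_n}) : ext F n :=
  [ffun T : {set 'I_n} => (T == S)%:R].

Definition ext_k (F : fieldType) (n k : nat) : {vspace ext F n} :=
  <<[seq emono F A | A <- enum [set A : {set 'I_n} | #|A| == k]]>>%VS.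

(* sign with e_i /\ e_T = (-1)^#{t in T | t < i} e_{T u {i}} for i \notin T *)
Definition wsign (F : fieldType) (n : nat) (i : 'I_n) (T : {set 'I_n}) : F :=
  (-1) ^+ #|[set t in T | (t < i)%N]|.

(* left multiplication by the basis vector e_i:
   e_i /\ e_T = wsign i T e_{T u {i}} if i \notin T, and 0 if i \in T *)
Definition wedge_e (F : fieldType) (n : nat) (i : 'I_n) (m : ext F n) : ext F n :=
  [ffun S : {set 'I_n} => if i \in S then wsign F i (S :\ i) * m (S :\ i) else 0].

(* unique decomposition m = x + e_j /\ y with x, y not involving e_j *)
Definition xpart (F : fieldType) (n : nat) (j : 'I_n) (m : ext F n) : ext F n :=
  [ffun S : {set 'I_n} => if j \in S then 0 else m S].
Definition ypart (F : fieldType) (n : nat) (j : 'I_n) (m : ext F n) : ext F n :=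
  [ffun T : {set 'I_n} => if j \in T then 0 else wsign F j T * m (j |: T)].

Definition slow_shift (F : fieldType) (n : nat) (j i : 'I_n) (m : ext F n) : ext F n :=
  let v := xpart j m + wedge_e i (ypart j m) in
  if v != 0 then v else wedge_e j (ypart j m).

(* membership in N_{j -> i} L = span of { N_{j->i} m : m in L, m <> 0 }:
   finite linear combinations of such vectors *)
Definition in_shift (F : fieldType) (n : nat) (j i : 'I_n) (L : {vspace ext F n})
  (v : ext F n) : Prop :=
  exists s : seq (ext F n),
    (forall w, w \in s -> exists2 m, (m \in L) && (m != 0) & w = slow_shift j i m)
    /\ v \in <<s>>%VS.

(* Main.v *)
Require Import Defs.
From mathcomp Require Import all_boot all_order all_algebra.
Set Implicit Arguments. Unset Strict Implicit. Unset Printing Implicit Defensive.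
Import GRing.Theory.
Local Open Scope ring_scope.

Section H.
Variables (F : fieldType) (n : nat).
Implicit Types (m v : ext F n) (S T : {set 'I_n}).

Lemma span_emono_out (s : seq {set 'I_n}) v S :
  v \in <<[seq emono F A | A <- s]>>%VS -> S \notin s -> v S = 0.
Proof.
move=> Hv Ss; rewrite (coord_span (X := in_tuple [seq emono F A | A <- s]) Hv); rewrite sum_ffunE big1 // => i _.
rewrite ffunE (nth_map set0); last by rewrite -(size_map (@emono F n)).
rewrite ffunE; case: eqP => [eS|] /=; last by rewrite scaler0.
by case/negP: Ss; rewrite eS mem_nth // -(size_map (@emono F n)).
Qed.

Lemma ext_k_out k v S : v \in ext_k F n k -> #|S| != k -> v S = 0.
Proof. by move=> /span_emono_out H1 HS; apply: H1; rewrite mem_enum inE. Qed.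

Lemma free_emono (s : seq {set 'I_n}) : uniq s -> free [seq emono F A | A <- s].
Proof.
elim: s => [|A s IH] /=; first by rewrite nil_free.
case/andP=> As us; rewrite free_cons IH // andbT.
apply/negP => /span_emono_out /(_ As)/eqP; rewrite ffunE eqxx /=.
by rewrite oner_eq0.
Qed.

Lemma emono_sum v : v = \sum_S v S *: emono F S.
Proof.
apply/ffunP => T; rewrite sum_ffunE (bigD1 T) //= big1 => [|S /negbTE nST].
  by rewrite !ffunE eqxx addr0 /= -[RHS]/(v T * 1) mulr1.
by rewrite !ffunE eq_sym nST /= scaler0.
Qed.
End H.
Section H2.
Variables (F : fieldType) (n : nat).
Implicit Types (m v y : ext F n) (S T : {set 'I_n}) (i j : 'I_n).

Lemma wsign2 i T : wsign F i T * wsign F i T = 1.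
Proof. by rewrite /wsign -exprD addnn -mul2n exprM sqrrN expr1n expr1n. Qed.

Definition freeof j y := forall T, j \in T -> y T = 0.

Lemma ypart_free j m : freeof j (ypart j m).
Proof. by move=> T jT; rewrite ffunE jT. Qed.

Lemma decomp j m : m = xpart j m + wedge_e j (ypart j m).
Proof.
apply/ffunP => S; rewrite !ffunE; case: ifP => jS.
  by rewrite setD1K // !inE eqxx /= mulrA wsign2 mul1r add0r.
by rewrite addr0.
Qed.

Lemma xpart_wj j y : xpart j (wedge_e j y) = 0.
Proof. by apply/ffunP => S; rewrite !ffunE; case: ifP => // ->. Qed.

Lemma ypart_wj j y : freeof j y -> ypart j (wedge_e j y) = y.
Proof.
move=> fy; apply/ffunP => T; rewrite !ffunE; case: ifP => jT; first by rewrite fy.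
by rewrite setU11 setU1K ?jT // mulrA wsign2 mul1r.
Qed.

Lemma ypart_wi i j y : i != j -> freeof j y -> ypart j (wedge_e i y) = 0.
Proof.
move=> ij fy; apply/ffunP => T; rewrite !ffunE; case: ifP => // jT.
case: ifP => iT; last by rewrite mulr0.
by rewrite fy ?mulr0 // !inE eq_sym ij eqxx.
Qed.

Lemma xpart_wi i j y : i != j -> freeof j y -> xpart j (wedge_e i y) = wedge_e i y.
Proof.
move=> ij fy; apply/ffunP => S; rewrite !ffunE; case: ifP => // jS.
case: ifP => // iS; rewrite fy ?mulr0 //.
by rewrite !inE jS andbT eq_sym.
Qed.

Lemma xpartB j m1 m2 : xpart j (m1 - m2) = xpart j m1 - xpart j m2.
Proof. by apply/ffunP => S; rewrite !ffunE; case: ifP; rewrite ?subr0. Qed.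
Lemma xpartD j m1 m2 : xpart j (m1 + m2) = xpart j m1 + xpart j m2.
Proof. by apply/ffunP => S; rewrite !ffunE; case: ifP; rewrite ?addr0. Qed.
Lemma ypartB j m1 m2 : ypart j (m1 - m2) = ypart j m1 - ypart j m2.
Proof. by apply/ffunP => S; rewrite !ffunE; case: ifP; rewrite ?subr0 // mulrBr. Qed.
Lemma ypartD j m1 m2 : ypart j (m1 + m2) = ypart j m1 + ypart j m2.
Proof. by apply/ffunP => S; rewrite !ffunE; case: ifP; rewrite ?addr0 // mulrDr. Qed.
Lemma ypart_x j m : ypart j (xpart j m) = 0.
Proof. by apply/ffunP => S; rewrite !ffunE; case: ifP; rewrite // setU11 mulr0. Qed.
Lemma xpart_x j m : xpart j (xpart j m) = xpart j m.
Proof. by apply/ffunP => S; rewrite !ffunE; case: (j \in S). Qed.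
Lemma wedge_e0 i : wedge_e i (0 : ext F n) = 0.
Proof. by apply/ffunP => S; rewrite !ffunE; case: ifP; rewrite // mulr0. Qed.
Lemma ypart0 j : ypart j (0 : ext F n) = 0.
Proof. by apply/ffunP => S; rewrite !ffunE; case: ifP; rewrite // mulr0. Qed.
Lemma wedge_eN i y : wedge_e i (- y) = - wedge_e i y.
Proof. by apply/ffunP => S; rewrite !ffunE; case: ifP; rewrite ?oppr0 // mulrN. Qed.

Variable L : {vspace ext F n}.
Hypothesis Hsh : forall i j, i != j -> forall m, m \in L -> m != 0 -> slow_shift j i m \in L.

Lemma xpart_in i j m : i != j -> m \in L -> xpart j m \in L.
Proof.
move=> ij Hm; set y := ypart j m.
have Em := decomp j m; rewrite -/y in Em.
suff H : wedge_e j y \in L by have := memvB Hm H; rewrite {1}Em addrK.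
have [m0|mn0] := eqVneq m 0.
  by rewrite /y m0 ypart0 wedge_e0 mem0v.
have := Hsh ij Hm mn0; rewrite /slow_shift -/y.
case: ifP => [vn0 Hv | /negbFE v0 Hv]; last exact: Hv.
set w := m - (xpart j m + wedge_e i y).
have Hw : w \in L by apply: memvB.
have fy : freeof j y by apply: ypart_free.
have xw : xpart j w = - wedge_e i y.
  by rewrite /w xpartB xpartD xpart_x xpart_wi // opprD addrA subrr add0r.
have yw : ypart j w = y.
  by rewrite /w ypartB ypartD ypart_x ypart_wi // addr0 subr0.
have [w0|wn0] := eqVneq w 0.
  have : xpart j w = 0 by rewrite w0 /xpart; apply/ffunP => S; rewrite !ffunE; case: ifP.
  rewrite xw => /eqP; rewrite oppr_eq0 => /eqP wi0.
  move/eqP: w0; rewrite subr_eq0 wi0 addr0 => /eqP mx.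
  have : wedge_e j y = 0.
    by apply: (@addrI _ m); rewrite addr0 {2}Em -mx.
  by move=> ->; rewrite mem0v.
have := Hsh ij Hw wn0; rewrite /slow_shift xw yw addrC subrr eqxx //.
Qed.
Variable k : nat.
Hypothesis HL : (L <= ext_k F n k)%VS.

Lemma xpart_inL j m : m \in L -> xpart j m \in L.
Proof.
move=> Hm; have [i ij|none] := pickP (fun i => i != j).
  exact: xpart_in ij Hm.
have mk : m \in ext_k F n k by apply: (subvP HL).
have Tj : forall T, j \notin T -> T = set0.
  move=> T jT; apply/setP => x; rewrite inE; apply/negbTE.
  by have := none x => /= /negbFE/eqP ->.
case: k mk HL => [|k'] mk _.
  suff -> : xpart j m = m by [].
  apply/ffunP => T; rewrite ffunE; case: ifP => // jT.
  by rewrite (ext_k_out mk) // -lt0n card_gt0; apply/set0Pn; exists j.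
suff -> : xpart j m = 0 by rewrite mem0v.
apply/ffunP => T; rewrite !ffunE; case: ifP => // /negbT /Tj ->.
by rewrite (ext_k_out mk) // cards0.
Qed.

Definition Rp S (s : seq 'I_n) m : ext F n :=
  [ffun T : {set 'I_n} => if all (fun x : 'I_n => (x \in T) == (x \in S)) s then m T else 0].

Lemma Rp_in S s m : m \in L -> Rp S s m \in L.
Proof.
move=> Hm; elim: s => [|x s IH].
  by have -> : Rp S [::] m = m by apply/ffunP => T; rewrite ffunE.
have HX := xpart_inL x IH.
case xS : (x \in S).
  have -> : Rp S (x :: s) m = Rp S s m - xpart x (Rp S s m).
    apply/ffunP => T; rewrite !ffunE /= xS.
    by case: (x \in T) => /=; rewrite ?subr0 ?subrr.
  exact: memvB.
have -> : Rp S (x :: s) m = xpart x (Rp S s m).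
  apply/ffunP => T; rewrite !ffunE /= xS.
  by case: (x \in T) => /=.
exact: HX.
Qed.

Lemma emono_in m S : m \in L -> m S != 0 -> emono F S \in L.
Proof.
move=> Hm mS.
have E : Rp S (enum 'I_n) m = m S *: emono F S.
  apply/ffunP => T; rewrite !ffunE.
  have -> : all (fun x => (x \in T) == (x \in S)) (enum 'I_n) = (T == S).
    apply/allP/eqP => [H|->]; last by move=> x _; rewrite eqxx.
    by apply/setP => x; apply/eqP/H; rewrite mem_enum.
  case: eqP => [->|_] /=; first by rewrite -[RHS]/(m S * 1) mulr1.
  by rewrite scaler0.
have := Rp_in S (enum 'I_n) Hm; rewrite E => /(memvZ ((m S : F)^-1)).
by rewrite scalerA mulVf // scale1r.
Qed.
End H2.

Theorem corollary3p14 (F : fieldType) (n k : nat) (L : {vspace ext F n}) :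
  (2%:R != 0 :> F) ->
  (L <= ext_k F n k)%VS ->
  (forall i j : 'I_n, i != j ->
     forall v : ext F n, in_shift j i L v <-> v \in L) ->
  exists B : seq {set 'I_n},
    all (fun A : {set 'I_n} => #|A| == k) B /\ basis_of L [seq emono F A | A <- B].
Proof.
move=> _ HL H.
have Hsh : forall i j, i != j -> forall m, m \in L -> m != 0 -> slow_shift j i m \in L.
  move=> i j ij m Hm mn0; apply/(H i j ij); exists [:: slow_shift j i m]; split.
    by move=> w; rewrite inE => /eqP ->; exists m => //; rewrite Hm mn0.
  exact: memv_span (mem_head _ _).
exists (enum [set S | emono F S \in L]); split.
  apply/allP => A; rewrite mem_enum inE => HA.
  apply/negPn/negP => nk.
  have := ext_k_out (subvP HL _ HA) nk; rewrite ffunE eqxx => /eqP.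
  by rewrite oner_eq0.
apply/andP; split; last by apply: free_emono; exact: enum_uniq.
rewrite eqEsubv; apply/andP; split.
  apply/span_subvP => x /mapP [A]; rewrite mem_enum inE => HA ->; exact: HA.
apply/subvP => m Hm; rewrite (emono_sum m); apply: memv_suml => S _.
have [->|mS] := eqVneq (m S) 0; first by rewrite scale0r mem0v.
apply: memvZ; apply: memv_span; apply: map_f.
by rewrite mem_enum inE (emono_in Hsh HL Hm mS).
Qed.
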